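(* Let $H$ be a capacitated hypergraph with an MA-ordering $v_1,\ldots,v_n$, and let $\alpha\ge0$. If $v_i$ and $v_j$ ($i\ne j$) are in an $\alpha$-tight set, then $\lambda(v_i,v_j)\ge\alpha$.
   Context: A hypergraph $H=(V,E)$ has finite vertex set $V$, a finite multiset $E$ of edges (subsets of $V$) and capacities $c:E\to\mathbb{R}_{\ge0}$. $c(S)$ is the total capacity of edges meeting both $S$ and $V\setminus S$; for distinct $s,t$, $\lambda(s,t)=\min\{c(S):|S\cap\{s,t\}|=1\}$. For subsets $A_1,\ldots,A_k$, $d(A_1,\ldots,A_k)$ is the total capacity of edges meeting every $A_i$ (a vertex $v$ stands for $\{v\}$). $V_i=\{v_1,\ldots,v_i\}$; the ordering is an MA-ordering if $d(V_{i-1},v_i)\ge d(V_{i-1},v_j)$ for all $1\le i<j\le n$. A set of consecutive vertices $v_a,\ldots,v_b$ ($a\le b$) is $\alpha$-tight if $d(V_k,v_{k+1})\ge\alpha$ for all $a\le k<b$. *)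

(* Defs.v *)
From HB Require Import structures.
From mathcomp Require Import all_boot all_order all_algebra.
Set Implicit Arguments. Unset Strict Implicit. Unset Printing Implicit Defensive.
Import Order.TTheory GRing.Theory Num.Theory.
Local Open Scope ring_scope.

(* A capacitated hypergraph: vertices form the finType V, edges are indexed by
   the finType E (so the edge family is a multiset), [edge e : {set V}] is the
   vertex set of edge e and [c e] its capacity (nonnegativity is a hypothesis
   of the theorem). *)

Section Hyper.
Variables (R : realFieldType) (V E : finType)
          (edge : E -> {set V}) (c : E -> R).

Definition meets (e : E) (A : {set V}) : bool := edge e :&: A != set0.

Definition cutcap (S : {set V}) : R :=
  \sum_(e | meets e S && meets e (~: S)) c e.

Definition separates (s t : V) (S : {set V}) : bool :=
  #|S :&: [set s; t]| == 1%N.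

(* lambda(s,t) = min { c(S) : |S ∩ {s,t}| = 1 }; the seed value c({s}) is
   itself a candidate when s != t, so this is the genuine minimum. *)
Definition lambda (s t : V) : R :=
  \big[Num.min/cutcap [set s]]_(S : {set V} | separates s t S) cutcap S.

Definition d2 (A B : {set V}) : R :=
  \sum_(e | meets e A && meets e B) c e.

(* An ordering v_1..v_n of V is a duplicate-free sequence containing all of V.
   0-based: v_{i+1} = nth x0 ord i and V_i = {v_1..v_i} = [set x in take i ord]. *)
Definition is_ordering (ord : seq V) : Prop :=
  uniq ord /\ size ord = #|V|.

Definition prefix_set (ord : seq V) (i : nat) : {set V} :=
  [set x in take i ord].

(* MA-ordering: d(V_{i-1}, v_i) >= d(V_{i-1}, v_j) for 1 <= i < j <= n,
   written 0-based with i' = i-1, j' = j-1. *)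
Definition MA_ordering (x0 : V) (ord : seq V) : Prop :=
  is_ordering ord /\
  forall i j : nat, (i < j)%N -> (j < size ord)%N ->
    d2 (prefix_set ord i) [set nth x0 ord j] <=
    d2 (prefix_set ord i) [set nth x0 ord i].

(* The consecutive vertices at 0-based positions a..b (a <= b < n) form an
   alpha-tight set: d(V_k, v_{k+1}) >= alpha for all 1-based a+1 <= k < b+1,
   i.e. for 0-based positions k with a < k <= b, d(V_k, v_{k+1}) with
   V_k = take k ord and v_{k+1} = nth x0 ord k. *)
Definition alpha_tight (x0 : V) (ord : seq V) (alpha : R) (a b : nat) : Prop :=
  (a <= b)%N /\ (b < size ord)%N /\
  forall k : nat, (a < k)%N -> (k <= b)%N ->
    alpha <= d2 (prefix_set ord k) [set nth x0 ord k].

End Hyper.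

(* Main.v *)
Require Import Defs.
From HB Require Import structures.
From mathcomp Require Import all_boot all_order all_algebra.
Import Order.TTheory GRing.Theory Num.Theory.
Local Open Scope ring_scope.

Set Implicit Arguments. Unset Strict Implicit.
Section Proof.
Variables (R : realFieldType) (V E : finType) (edge : E -> {set V}) (c : E -> R).
Hypothesis hc : forall e, 0 <= c e.

Lemma meetsP e (A : {set V}) : reflect (exists2 x, x \in edge e & x \in A) (meets edge e A).
Proof.
rewrite /meets; apply: (iffP (set0Pn _)) => [[x]|[x h1 h2]].
  by rewrite inE => /andP [h1 h2]; exists x.
by exists x; rewrite inE h1 h2.
Qed.

Lemma meetsS e (A B : {set V}) : A \subset B -> meets edge e A -> meets edge e B.
Proof. by move=> /subsetP sAB /meetsP [x h1 h2]; apply/meetsP; exists x => //; apply: sAB. Qed.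

Definition cross (S X : {set V}) e := meets edge e (X :&: S) && meets edge e (X :\: S).

Lemma crossS (S X Y : {set V}) e : X \subset Y -> cross S X e -> cross S Y e.
Proof.
move=> sXY /andP [h1 h2]; apply/andP; split.
  by apply: (meetsS _ h1); apply: setSI.
by apply: (meetsS _ h2); apply: setSD.
Qed.

Lemma cross_meets (S X : {set V}) v e : cross S (X :|: [set v]) e -> meets edge e X.
Proof.
case/andP => /meetsP [x hx1 hx2] /meetsP [y hy1 hy2].
move: hx2 hy2; rewrite !inE => /andP [/orP [xX|/eqP xv] xS] /andP [yS /orP [yX|/eqP yv]].
- by apply/meetsP; exists x.
- by apply/meetsP; exists x.
- by apply/meetsP; exists y.
- by subst; rewrite xS in yS.
Qed.

Lemma cross_pair (S X : {set V}) e u w : u \in X -> w \in X -> u \in edge e -> w \in edge e ->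
  (u \in S) != (w \in S) -> cross S X e.
Proof.
move=> uX wX ue we; case: (boolP (u \in S)) => uS; case: (boolP (w \in S)) => wS //= _.
  by apply/andP; split; apply/meetsP; [exists u | exists w]; rewrite // !inE ?uS ?wS ?uX ?wX.
by apply/andP; split; apply/meetsP; [exists w | exists u]; rewrite // !inE ?uS ?wS ?uX ?wX.
Qed.

Lemma cross_cut (S X : {set V}) e : cross S X e -> meets edge e S && meets edge e (~: S).
Proof.
case/andP => h1 h2; apply/andP; split.
  by apply: (meetsS _ h1); apply: subsetIr.
by apply: (meetsS _ h2); rewrite setDE; apply: subsetIr.
Qed.

Lemma sum_split_le (A B T : pred E) :
  (forall e, A e -> B e -> False) -> (forall e, A e -> T e) -> (forall e, B e -> T e) ->
  \sum_(e | A e) c e + \sum_(e | B e) c e <= \sum_(e | T e) c e.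
Proof.
move=> hAB hA hB.
rewrite [X in X + _ <= _]big_mkcond [X in _ + X <= _]big_mkcond [X in _ <= X]big_mkcond.
rewrite -big_split /=; apply: ler_sum => e _.
case: (boolP (A e)) => a; case: (boolP (B e)) => b.
- by case: (hAB e a b).
- by rewrite (hA e a) addr0.
- by rewrite (hB e b) add0r.
- by rewrite addr0; case: (T e) => //.
Qed.

Lemma sum_sub_le (A T : pred E) : (forall e, A e -> T e) ->
  \sum_(e | A e) c e <= \sum_(e | T e) c e.
Proof.
move=> hA; have := @sum_split_le A pred0 T (fun _ _ b => ltac:(done)) hA (fun _ b => ltac:(done)).
by rewrite big_pred0_eq addr0.

Qed.

Variables (x0 : V) (ord : seq V).
Hypothesis hMA : MA_ordering edge c x0 ord.

Notation v k := (nth x0 ord k).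
Notation P k := (prefix_set ord k).

Lemma prefixS j : (j < size ord)%N -> P j.+1 = P j :|: [set v j].
Proof.
move=> hj; rewrite /prefix_set (take_nth x0 hj); apply/setP => x.
by rewrite !inE mem_rcons inE orbC.
Qed.

Lemma prefix0 : P 0 = set0.
Proof. by apply/setP => x; rewrite !inE take0. Qed.

Lemma mainG (S : {set V}) j : (j <= size ord)%N -> forall m, (j <= m)%N -> (m < size ord)%N ->
  (v m \in S) != (v j.-1 \in S) ->
  d2 edge c (P j) [set v m] <= \sum_(e | cross S (P j :|: [set v m]) e) c e.
Proof.
elim: j => [|j IH] hj m hjm hm hside.
  apply: sum_sub_le => e /andP [h _]; move: h; rewrite prefix0 => /meetsP [x _].
  by rewrite inE.
have hjs : (j < size ord)%N by [].
rewrite /= in hside.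
rewrite /d2 (bigID (fun e => meets edge e (P j))) /=.
have -> : \sum_(e | meets edge e (P j.+1) && meets edge e [set v m] && meets edge e (P j)) c e
    = d2 edge c (P j) [set v m].
  apply: eq_bigl => e; rewrite /=; case: (boolP (meets edge e (P j))) => h;
    rewrite ?andbT ?andbF //.
  rewrite (meetsS _ h) //; rewrite prefixS //; exact: subsetUl.
set B := fun e => meets edge e (P j.+1) && meets edge e [set v m] && ~~ meets edge e (P j).
have hB : forall e, B e -> cross S (P j.+1 :|: [set v m]) e.
  move=> e; rewrite /B prefixS // => /andP [/andP [h1 h2] h3].
  have h1' : v j \in edge e.
    case/meetsP: h1 => x xe /setUP [xP|]; last by rewrite inE => /eqP <-.
    by case/negP: h3; apply/meetsP; exists x.
  have h2' : v m \in edge e by case/meetsP: h2 => x xe; rewrite inE => /eqP <-.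
  apply: (cross_pair (u := v m) (w := v j)) => //; rewrite ?inE ?eqxx ?orbT //.
case: (boolP ((v j \in S) == (v j.-1 \in S))) => hjj.
- have hm' : (v m \in S) != (v j.-1 \in S) by rewrite -(eqP hjj).
  have := IH (ltnW hjs) m (ltnW hjm) hm hm'.
  set A := fun e => cross S (P j :|: [set v m]) e => hle.
  apply: le_trans (lerD hle (lexx _)) _.
  apply: sum_split_le.
  + by move=> e /cross_meets h /andP [_ h'] ; rewrite h in h'.
  + move=> e; apply: crossS; rewrite prefixS // setUSS //; exact: subsetUl.
  + exact: hB.
- have hle1 : d2 edge c (P j) [set v m] <= d2 edge c (P j) [set v j].
    by case: hMA => _ hMA'; apply: hMA'.
  have := IH (ltnW hjs) j (leqnn j) hjs hjj.
  move=> hle.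
  apply: le_trans (lerD (le_trans hle1 hle) (lexx _)) _.
  apply: sum_split_le.
  + by move=> e /cross_meets h /andP [_ h'] ; rewrite h in h'.
  + move=> e; apply: crossS; rewrite prefixS //; exact: subsetUl.
  + exact: hB.
Qed.

Lemma pendant (S : {set V}) k : (0 < k)%N -> (k < size ord)%N -> (v k \in S) != (v k.-1 \in S) ->
  d2 edge c (P k) [set v k] <= cutcap edge c S.
Proof.
move=> hk0 hk hs.
apply: le_trans (mainG (ltnW hk) (leqnn k) hk hs) _.
apply: sum_sub_le => e; exact: cross_cut.
Qed.

End Proof.
Unset Implicit Arguments.

Lemma switch (f : nat -> bool) i j : (i < j)%N -> f i != f j ->
  exists k, (i < k <= j)%N /\ f k.-1 != f k.
Proof.
elim: j => [//|j IH] hij hf.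
case: (boolP (f j != f j.+1)) => h.
  by exists j.+1; rewrite leqnn andbT.
move/negPn/eqP: h => h.
rewrite ltnS leq_eqVlt in hij; case/orP: hij => [/eqP eij | lij].
  by subst; rewrite h eqxx in hf.
have [k [/andP [h1 h2] h3]] := IH lij ltac:(by rewrite h).
by exists k; rewrite h1 (leqW h2).
Qed.

Lemma sep_side (V : finType) (s t : V) (S : {set V}) : s != t -> separates s t S ->
  (s \in S) != (t \in S).
Proof.
rewrite /separates => hst.
case: (boolP (s \in S)) => hs; case: (boolP (t \in S)) => ht //=.
  have -> : S :&: [set s; t] = [set s; t].
    by apply/setIidPr; rewrite subUset !sub1set hs ht.
  by rewrite cards2 hst.
have -> : S :&: [set s; t] = set0.
  apply/setP => x; rewrite !inE; apply/negbTE/andP => [[hx /orP [/eqP ex|/eqP ex]]]; subst.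
    by rewrite hx in hs.
  by rewrite hx in ht.
by rewrite cards0.
Qed.

Theorem mainTheorem19 (R : realFieldType) (V E : finType)
  (edge : E -> {set V}) (c : E -> R) (x0 : V) (ord : seq V) (alpha : R)
  (a b i j : nat) :
  (forall e, 0 <= c e) ->
  MA_ordering edge c x0 ord ->
  0 <= alpha ->
  alpha_tight edge c x0 ord alpha a b ->
  (a <= i <= b)%N -> (a <= j <= b)%N -> i <> j ->
  alpha <= lambda edge c (nth x0 ord i) (nth x0 ord j).
Proof.
move=> hc hMA ha [hab [hb htight]] hi hj hij.
have key : forall i j, (a <= i <= b)%N -> (a <= j <= b)%N -> (i < j)%N ->
    forall S : {set V}, (nth x0 ord i \in S) != (nth x0 ord j \in S) -> alpha <= cutcap edge c S.
  move=> i' j' /andP [hi1 hi2] /andP [hj1 hj2] hlt S hS.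
  have [k [/andP [hk1 hk2] hk3]] := switch (fun k => nth x0 ord k \in S) _ _ hlt hS.
  have hkb : (k <= b)%N by apply: leq_trans hk2 hj2.
  have hks : (k < size ord)%N by apply: leq_ltn_trans hkb hb.
  apply: le_trans (htight k (leq_ltn_trans hi1 hk1) hkb) _.
  apply: (pendant hc hMA) => //; first by apply: leq_ltn_trans hk1.
  by rewrite eq_sym.
have key2 : forall S : {set V}, (nth x0 ord i \in S) != (nth x0 ord j \in S) -> alpha <= cutcap edge c S.
  move=> S hS; have [h|h|h] := ltngtP i j.
  - exact: key _ _ hi hj h S hS.
  - by apply: (key _ _ hj hi h); rewrite eq_sym.
  - by case: hij.
have hsz : (i < size ord)%N /\ (j < size ord)%N.
  by case/andP: hi => _ /leq_ltn_trans/(_ hb); case/andP: hj => _ /leq_ltn_trans/(_ hb).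
have hst : nth x0 ord i != nth x0 ord j.
  case: hMA => [[hu _] _]; rewrite nth_uniq //; [by apply/eqP | by case: hsz | by case: hsz].
rewrite /lambda; apply: (big_ind (fun x => alpha <= x)).
- apply: key2; rewrite !inE eqxx eq_sym.
  by move: hst; rewrite eq_sym => /negbTE ->.
- by move=> x y hx hy; rewrite le_min hx hy.
- by move=> S hS; apply: key2; apply: sep_side.
Qed.
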